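(* Let $M$ be a graded $R$-module and let $K$, $N$ and $\{K_i\mid i\in I\}$ be graded submodules of $M$. Then: (1) $qp\text{-}V_M^g(0)=qp.Spec_g(M)$ and $qp\text{-}V_M^g(M)=\emptyset$. (2) $\bigcap_{i\in I}qp\text{-}V_M^g(K_i)=qp\text{-}V_M^g\big((\sum_{i\in I}(K_i:_RM))M\big)$. (3) $qp\text{-}V_M^g(N)\cup qp\text{-}V_M^g(K)=qp\text{-}V_M^g(N\cap K)$.
   Context: $G$ is a group with identity $e$, $R=\bigoplus_{g\in G}R_g$ is a $G$-graded commutative ring with identity, $h(R)=\bigcup_{g\in G}R_g$, and $M$ is a graded unital $R$-module with set of homogeneous elements $h(M)$. For a graded ideal $I$ of $R$, $Gr(I)$ is the set of $r=\sum_g r_g\in R$ such that for each $g$ some power $r_g^{n_g}$ lies in $I$; it equals the intersection of all graded prime ideals of $R$ containing $I$. For a submodule $K$ of $M$, $(K:_RM)=\{r\in R: rM\subseteq K\}$. A graded prime submodule of $M$ is a proper graded submodule $P$ such that $r\in h(R)$, $m\in h(M)$, $rm\in P$ imply $m\in P$ or $r\in (P:_RM)$. For a graded submodule $K$, $Gr_M(K)$ is the intersection of all graded prime submodules of $M$ containing $K$ ($Gr_M(K)=M$ if there is none). A graded submodule $K$ satisfies the graded primeful property if for each graded prime ideal $p$ of $R$ with $(K:_RM)\subseteq p$ there is a graded prime submodule $P\supseteq K$ with $(P:_RM)=p$. A graded quasi-primary submodule of $M$ is a proper graded submodule $Q$ such that whenever $r\in h(R)$, $m\in h(M)$, $rm\in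 Q$, then $r\in Gr((Q:_RM))$ or $m\in Gr_M(Q)$. $qp.Spec_g(M)$ denotes the set of all graded quasi-primary submodules of $M$ satisfying the graded primeful property. For a graded submodule $K$ of $M$, $qp\text{-}V_M^g(K)=\{Q\in qp.Spec_g(M)\mid Gr((Q:_RM))\supseteq Gr((K:_RM))\}$. *)

(* Defs.v *)
From HB Require Import structures.
From mathcomp Require Import all_boot all_order all_algebra.
From Stdlib Require List.
Set Implicit Arguments. Unset Strict Implicit. Unset Printing Implicit Defensive.
Import GRing.Theory.
Local Open Scope ring_scope.

Record Grp := MkGrp {
  gcar :> Type;
  gmul : gcar -> gcar -> gcar;
  gone : gcar;
  ginv : gcar -> gcar;
  gmulA : forall x y z, gmul x (gmul y z) = gmul (gmul x y) z;
  gmul1 : forall x, gmul gone x = x;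
  gmulV : forall x, gmul (ginv x) x = gone
}.

Section Graded.
Variable G : Grp.

Definition hdecomp (V : zmodType) (D : G -> V -> Prop) (x : V)
    (l : seq (G * V)) : Prop :=
  List.NoDup (map fst l) /\ (forall p, List.In p l -> D p.1 p.2) /\
  x = \sum_(p <- l) p.2.

Definition direct_sum_grading (V : zmodType) (D : G -> V -> Prop) : Prop :=
  (forall g, D g 0 /\ forall x y, D g x -> D g y -> D g (x - y)) /\
  (forall x, exists l, hdecomp D x l) /\
  (forall l : seq (G * V), List.NoDup (map fst l) ->
     (forall p, List.In p l -> D p.1 p.2) -> \sum_(p <- l) p.2 = 0 ->
     forall p, List.In p l -> p.2 = 0).

Definition graded_ring (R : comPzRingType) (Rg : G -> R -> Prop) : Prop :=
  direct_sum_grading Rg /\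
  forall g h a b, Rg g a -> Rg h b -> Rg (gmul g h) (a * b).

Definition graded_module (R : comPzRingType) (M : lmodType R)
    (Rg : G -> R -> Prop) (Mg : G -> M -> Prop) : Prop :=
  direct_sum_grading Mg /\
  forall g h r m, Rg g r -> Mg h m -> Mg (gmul g h) (r *: m).

Variables (R : comPzRingType) (M : lmodType R).
Variables (Rg : G -> R -> Prop) (Mg : G -> M -> Prop).

Definition homR (r : R) : Prop := exists g, Rg g r.
Definition homM (m : M) : Prop := exists g, Mg g m.

Definition is_ideal (I : R -> Prop) : Prop :=
  I 0 /\ (forall x y, I x -> I y -> I (x + y)) /\ (forall r x, I x -> I (r * x)).
Definition graded_ideal (I : R -> Prop) : Prop :=
  is_ideal I /\ forall x, I x -> exists l, hdecomp Rg x l /\ forall p, List.In p l -> I p.2.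
Definition graded_prime_ideal (p : R -> Prop) : Prop :=
  graded_ideal p /\ ~ p 1 /\
  forall a b, homR a -> homR b -> p (a * b) -> p a \/ p b.

Definition is_submod (N : M -> Prop) : Prop :=
  N 0 /\ (forall x y, N x -> N y -> N (x + y)) /\ (forall r x, N x -> N (r *: x)).
Definition graded_submod (N : M -> Prop) : Prop :=
  is_submod N /\ forall x, N x -> exists l, hdecomp Mg x l /\ forall p, List.In p l -> N p.2.
Definition proper_sub (N : M -> Prop) : Prop := exists m, ~ N m.

Definition colon (K : M -> Prop) : R -> Prop := fun r => forall m, K (r *: m).

Definition Gr (I : R -> Prop) : R -> Prop := fun r =>
  exists l, hdecomp Rg r l /\ forall p, List.In p l -> exists n : nat, I (p.2 ^+ n).

Definition graded_prime_submod (P : M -> Prop) : Prop :=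
  graded_submod P /\ proper_sub P /\
  forall r m, homR r -> homM m -> P (r *: m) -> P m \/ colon P r.

(* Gr_M(K): intersection of all graded prime submodules containing K
   (= M when there is none). *)
Definition GrM (K : M -> Prop) : M -> Prop := fun m =>
  forall P, graded_prime_submod P -> (forall x, K x -> P x) -> P m.

Definition graded_primeful (K : M -> Prop) : Prop :=
  forall p, graded_prime_ideal p -> (forall r, colon K r -> p r) ->
  exists P, graded_prime_submod P /\ (forall x, K x -> P x) /\
            (forall r, colon P r <-> p r).

Definition graded_quasi_primary (Q : M -> Prop) : Prop :=
  graded_submod Q /\ proper_sub Q /\
  forall r m, homR r -> homM m -> Q (r *: m) -> Gr (colon Q) r \/ GrM Q m.

Definition qpSpec (Q : M -> Prop) : Prop :=
  graded_quasi_primary Q /\ graded_primeful Q.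

Definition qpV (K : M -> Prop) (Q : M -> Prop) : Prop :=
  qpSpec Q /\ forall r, Gr (colon K) r -> Gr (colon Q) r.

Definition ideal_sum (I : Type) (J : I -> R -> Prop) : R -> Prop := fun r =>
  exists l : seq (I * R), (forall p, List.In p l -> J p.1 p.2) /\ r = \sum_(p <- l) p.2.

Definition ideal_mul_mod (J : R -> Prop) : M -> Prop := fun m =>
  exists l : seq (R * M), (forall p, List.In p l -> J p.1) /\ m = \sum_(p <- l) p.1 *: p.2.

End Graded.

(* Main.v *)
Require Import Defs.
From mathcomp Require Import all_boot all_order all_algebra.
From Stdlib Require List.
From mathcomp Require classical_sets.
From mathcomp Require Import ring zify.
From Stdlib Require Import Classical ClassicalEpsilon.
Set Implicit Arguments. Unset Strict Implicit. Unset Printing Implicit Defensive.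
Import GRing.Theory.
Local Open Scope ring_scope.


Section Gen.
Variable G : Grp.

Lemma gmulV_r (x : G) : gmul x (ginv x) = gone G.
Proof.
have e1 : gmul (ginv (ginv x)) (ginv x) = gone G by apply: gmulV.
rewrite -[LHS]gmul1 -{1}e1 -gmulA (gmulA (ginv x) x) gmulV gmul1 //.
Qed.

Lemma gmul1r (x : G) : gmul x (gone G) = x.
Proof. by rewrite -(gmulV x) gmulA gmulV_r gmul1. Qed.

Lemma gmul_inj_r (h g g' : G) : gmul g h = gmul g' h -> g = g'.
Proof.
move=> e.
have : gmul (gmul g h) (ginv h) = gmul (gmul g' h) (ginv h) by rewrite e.
by rewrite -!gmulA gmulV_r !gmul1r.
Qed.
End Gen.

Section Lists.
Variables (A B : Type).

Lemma In_filter (P : pred A) (t : seq A) x : List.In x (filter P t) -> List.In x t /\ P x.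
Proof.
elim: t => //= y t IH; case Py: (P y) => /=.
  by case=> [<-|/IH [? ?]]; [split; [left|]|split; [right|]].
by move=> /IH [? ?]; split; [right|].
Qed.

Lemma In_map (f : A -> B) (t : seq A) y : List.In y (map f t) -> exists x, List.In x t /\ y = f x.
Proof.
elim: t => //= x t IH; case=> [<-|/IH [z [? ?]]]; first by exists x; split; [left|].
by exists z; split; [right|].
Qed.

Lemma In_map2 (f : A -> B) (t : seq A) x : List.In x t -> List.In (f x) (map f t).
Proof. by elim: t => //= z t IH [->|/IH]; [left|right]. Qed.

Lemma NoDup_map_filter (f : A -> B) (P : pred A) (t : seq A) :
  List.NoDup (map f t) -> List.NoDup (map f (filter P t)).
Proof.
elim: t => //= x t IH /List.NoDup_cons_iff [nx nd]; case: (P x) => /=; last exact: IH.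
constructor; last exact: IH.
move=> /In_map [z [/In_filter [zt _] e]]; apply: nx; rewrite e; exact: In_map2.
Qed.
End Lists.

Lemma NoDup_map_inj (A B C D : Type) (f : A -> B) (f' : C -> D) (t : seq A) (g : A -> C) :
  (forall x y, f' (g x) = f' (g y) -> f x = f y) ->
  List.NoDup (map f t) -> List.NoDup (map f' (map g t)).
Proof.
move=> inj; elim: t => [|x t IH] /=; first by constructor.
move=> /List.NoDup_cons_iff [nx nd].
constructor; last exact: IH.
move=> H; have [z [zt e]] := In_map H; have [w [wt ew]] := In_map zt; subst z; apply: nx.
rewrite (inj _ _ e); exact: In_map2.
Qed.

Section Sums.
Variables (G : Grp) (V : zmodType) (D : G -> V -> Prop).
Hypothesis HD : forall g, D g 0 /\ forall x y, D g x -> D g y -> D g (x - y).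

Definition eqG (g h : G) : bool := if excluded_middle_informative (g = h) then true else false.
Lemma eqGP g h : reflect (g = h) (eqG g h).
Proof. by rewrite /eqG; case: excluded_middle_informative => ?; constructor. Qed.

Definition fsum (l : seq (G * V)) g := \sum_(p <- l | eqG p.1 g) p.2.

Lemma fsum_cons h v t g : fsum ((h, v) :: t) g = (if eqG h g then v else 0) + fsum t g.
Proof. by rewrite /fsum big_cons /=; case: eqG; rewrite ?add0r. Qed.

Lemma sum_closed (T : Type) (S : V -> Prop) (S0 : S 0)
  (SD : forall x y, S x -> S y -> S (x + y)) (l : seq T) (P : pred T) (F : T -> V) :
  (forall p, List.In p l -> P p -> S (F p)) -> S (\sum_(p <- l | P p) F p).
Proof.
elim: l => [|x l IH] H; first by rewrite big_nil.
rewrite big_cons; have IH' : S (\sum_(p <- l | P p) F p) by apply: IH => p pl; apply: H; right.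
by case Px: (P x) => //; apply: SD => //; apply: H => //; left.
Qed.

Lemma D0 g : D g 0. Proof. by case: (HD g). Qed.
Lemma DN g x : D g x -> D g (- x).
Proof. by move=> Dx; rewrite -sub0r; apply: (HD g).2 => //; apply: D0. Qed.
Lemma DD g x y : D g x -> D g y -> D g (x + y).
Proof. by move=> Dx Dy; rewrite -[y]opprK; apply: (HD g).2 => //; apply: DN. Qed.

Lemma fsum_D l g : (forall p, List.In p l -> D p.1 p.2) -> D g (fsum l g).
Proof.
move=> H; apply: sum_closed; [exact: D0 | exact: DD |].
by move=> p pl /eqGP <-; apply: H.
Qed.

Lemma gmerge (S : V -> Prop) (S0 : S 0) (SD : forall x y, S x -> S y -> S (x + y)) l :
  (forall p, List.In p l -> D p.1 p.2 /\ S p.2) ->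
  exists l', List.NoDup (map fst l') /\ (forall p, List.In p l' -> D p.1 p.2 /\ S p.2) /\
    \sum_(p <- l') p.2 = \sum_(p <- l) p.2 /\ forall g, fsum l' g = fsum l g.
Proof.
elim: l => [|[g v] t IH] H.
  by exists [::]; split; [constructor|split].
have [t' [nd [Ht' [st' ft']]]] : exists l', List.NoDup (map fst l') /\ (forall p, List.In p l' -> D p.1 p.2 /\ S p.2) /\
    \sum_(p <- l') p.2 = \sum_(p <- t) p.2 /\ forall g, fsum l' g = fsum t g.
  by apply: IH => p pt; apply: H; right.
have [Dv Sv] := H _ (or_introl erefl).
exists ((g, v + fsum t' g) :: filter (fun p => ~~ eqG p.1 g) t'); split; [|split; [|split]].
- constructor; last exact: NoDup_map_filter.
  move=> Hi; have [z [zi e]] := In_map Hi; have [_ /eqGP nz] := In_filter zi; by apply: nz.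
- move=> p /= [<-|pf]; last by have [pt _] := In_filter pf; exact: Ht'.
  split; first by apply: DD => //; apply: fsum_D => q /Ht' [].
  apply: (SD); first exact: Sv; apply: (sum_closed S0 SD) => q qt _; by case: (Ht' q qt).
- rewrite big_cons big_cons /= -st' -addrA; congr (_ + _).
  by rewrite /fsum [in RHS](bigID (fun p => eqG p.1 g)) /= big_filter.
- move=> h; rewrite fsum_cons fsum_cons -ft' /fsum big_filter_cond /=.
  case: (eqGP g h) => [<-|ngh].
    rewrite [X in _ + X = _]big1 => [|p /andP[/negP a b] //].
    by rewrite addr0.
  rewrite !add0r; apply: eq_bigl => p; case: (eqGP p.1 h) => [->|]; last by rewrite andbF.
  by case: (eqGP h g) => // e; case: ngh.
Qed.


Lemma fsum_notin l g : ~ List.In g (map fst l) -> fsum l g = 0.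
Proof.
elim: l => [|[h w] t IH] /= nin; first by rewrite /fsum big_nil.
rewrite fsum_cons IH; last by move=> H; apply: nin; right.
by case: (eqGP h g) => [e|_]; [case: nin; left|rewrite addr0].
Qed.

Lemma fsum_in l g v : List.NoDup (map fst l) -> List.In (g, v) l -> fsum l g = v.
Proof.
elim: l => [|[h w] t IH] //= /List.NoDup_cons_iff [nh nd] [[e1 e2]|gt].
  subst h w; rewrite fsum_cons fsum_notin //.
  by case: (eqGP g g) => // _; rewrite addr0.
rewrite fsum_cons IH //; case: (eqGP h g) => [e|_]; last by rewrite add0r.
by case: nh; rewrite e; apply: (In_map2 fst gt).
Qed.

Hypothesis HU : forall l : seq (G * V), List.NoDup (map fst l) ->
     (forall p, List.In p l -> D p.1 p.2) -> \sum_(p <- l) p.2 = 0 ->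
     forall p, List.In p l -> p.2 = 0.

Lemma fsum_uniq l1 l2 : (forall p, List.In p l1 -> D p.1 p.2) ->
  (forall p, List.In p l2 -> D p.1 p.2) ->
  \sum_(p <- l1) p.2 = \sum_(p <- l2) p.2 -> forall g, fsum l1 g = fsum l2 g.
Proof.
move=> H1 H2 e g.
pose l := l1 ++ map (fun p => (p.1, - p.2)) l2.
have [l' [nd [Hl' [sl' fl']]]] := @gmerge (fun _ => True) I (fun _ _ _ _ => I) l
  ltac:(move=> p pa; case: (List.in_app_or _ _ _ pa) => [/H1 //|pm];
        have [q [qt ->]] := In_map pm; split; [apply: DN; exact: (H2 q qt) | done]).
have sl : \sum_(p <- l) p.2 = 0 by rewrite big_cat big_map /= sumrN e subrr.
have z : forall p, List.In p l' -> p.2 = 0.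
  apply: HU => //; first by move=> p /Hl' [].
  by rewrite sl' sl.
have : fsum l' g = 0.
  apply: (@sum_closed _ (fun x => x = 0)) => //; first by move=> x y -> ->; rewrite addr0.
  by move=> p /z.
rewrite fl' /fsum big_cat big_map /= sumrN => /eqP; rewrite subr_eq0 => /eqP.
by [].
Qed.

End Sums.


Section Ideals.
Variable R : comPzRingType.

Lemma id0 (I : R -> Prop) : is_ideal I -> I 0. Proof. by case. Qed.
Lemma idD (I : R -> Prop) x y : is_ideal I -> I x -> I y -> I (x + y).
Proof. by case=> _ [H _]; apply: H. Qed.
Lemma idMl (I : R -> Prop) r x : is_ideal I -> I x -> I (r * x).
Proof. by case=> _ [_ H]; apply: H. Qed.
Lemma idMr (I : R -> Prop) r x : is_ideal I -> I x -> I (x * r).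
Proof. by move=> hI Ix; rewrite mulrC; apply: idMl. Qed.
Lemma idMn (I : R -> Prop) x k : is_ideal I -> I x -> I (x *+ k).
Proof.
move=> hI Ix; elim: k => [|k IH]; first by rewrite mulr0n; apply: id0.
by rewrite mulrS; apply: idD.
Qed.

Lemma rad_add (I : R -> Prop) a c n m : is_ideal I -> I (a ^+ n) -> I (c ^+ m) ->
  I ((a + c) ^+ (n + m)).
Proof.
move=> hI Ia Ic; rewrite exprDn; apply: big_ind; [exact: id0 | by move=> x y; apply: idD |].
move=> [i /= lti] _; apply: idMn => //.
have [lt|le] := ltnP i m.
  have -> : (n + m - i = (n + m - i - n) + n)%N by rewrite subnK //; lia.
  by rewrite exprD -mulrA; apply: (idMl _ hI); apply: (idMr _ hI).
by rewrite -(subnK le) exprD mulrA; apply: (idMl _ hI).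
Qed.

End Ideals.

Lemma hdecomp1 (G : Grp) (V : zmodType) (D : G -> V -> Prop) g v :
  D g v -> hdecomp D v [:: (g, v)].
Proof.
move=> Dv; split; first by constructor; [by []|constructor].
split; first by move=> p [<-|[]].
by rewrite big_cons big_nil addr0.
Qed.

Section Graded2.
Variables (G : Grp) (R : comPzRingType) (M : lmodType R).
Variables (Rg : G -> R -> Prop) (Mg : G -> M -> Prop).
Hypothesis HR : graded_ring Rg.
Hypothesis HM : graded_module Rg Mg.

Lemma HRD : forall g, Rg g 0 /\ forall x y, Rg g x -> Rg g y -> Rg g (x - y).
Proof. by case: HR => [[]]. Qed.
Lemma HRe : forall x, exists l, hdecomp Rg x l.
Proof. by case: HR => [[_ []]]. Qed.
Lemma HRU : forall l : seq (G * R), List.NoDup (map fst l) ->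
     (forall p, List.In p l -> Rg p.1 p.2) -> \sum_(p <- l) p.2 = 0 ->
     forall p, List.In p l -> p.2 = 0.
Proof. by case: HR => [[_ []]]. Qed.
Lemma HRM : forall g h a b, Rg g a -> Rg h b -> Rg (gmul g h) (a * b).
Proof. by case: HR. Qed.
Lemma HMD : forall g, Mg g 0 /\ forall x y, Mg g x -> Mg g y -> Mg g (x - y).
Proof. by case: HM => [[]]. Qed.
Lemma HMe : forall x, exists l, hdecomp Mg x l.
Proof. by case: HM => [[_ []]]. Qed.
Lemma HMU : forall l : seq (G * M), List.NoDup (map fst l) ->
     (forall p, List.In p l -> Mg p.1 p.2) -> \sum_(p <- l) p.2 = 0 ->
     forall p, List.In p l -> p.2 = 0.
Proof. by case: HM => [[_ []]]. Qed.
Lemma HMM : forall g h r m, Rg g r -> Mg h m -> Mg (gmul g h) (r *: m).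
Proof. by case: HM. Qed.

Lemma Gr_rad (I : R -> Prop) r : is_ideal I -> Gr Rg I r -> exists k, I (r ^+ k).
Proof.
move=> hI [l [[_ [_ ->]] H]]; elim: l H => [|p l IH] H.
  by exists 1%N; rewrite big_nil expr1; apply: id0.
rewrite big_cons; have [n In] := H p (or_introl erefl).
have [m Im] := IH (fun q ql => H q (or_intror ql)).
by exists (n + m)%N; apply: rad_add.
Qed.

Lemma Gr_hom (I : R -> Prop) g c n : Rg g c -> I (c ^+ n) -> Gr Rg I c.
Proof.
move=> Dc Ic; exists [:: (g, c)]; split; first exact: hdecomp1.
by move=> p [<-|[]]; exists n.
Qed.

Lemma homR_exp c n : homR Rg c -> homR Rg (c ^+ n.+1).
Proof.
move=> [g Hg]; elim: n => [|n [h IH]]; first by exists g; rewrite expr1.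
by exists (gmul g h); rewrite exprS; apply: HRM.
Qed.

Lemma prime_pow (p : R -> Prop) c n : graded_prime_ideal Rg p -> homR Rg c -> p (c ^+ n) -> p c.
Proof.
move=> [_ [p1 pr]] hc; case: n => [|n]; first by rewrite expr0.
elim: n => [|n IH]; first by rewrite expr1.
rewrite exprS => H; case: (pr _ _ hc (homR_exp n hc) H) => //; exact: IH.
Qed.

Lemma colon_ideal (K : M -> Prop) : is_submod K -> is_ideal (colon K).
Proof.
move=> [K0 [KD KZ]]; split; [|split].
- by move=> m; rewrite scale0r.
- by move=> x y Hx Hy m; rewrite scalerDl; apply: KD.
- by move=> r x Hx m; rewrite -scalerA; apply: KZ.
Qed.

Lemma colon_graded (K : M -> Prop) : graded_submod Mg K -> graded_ideal Rg (colon K).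
Proof.
move=> [hK Kg]; split; first exact: colon_ideal.
have K0 : K 0 by case: hK.
have KD : forall x y, K x -> K y -> K (x + y) by case: hK => _ [].
move=> r Kr; have [l [nd [Dl sl]]] := HRe r.
exists l; split; first by [].
move=> [g c] pl m /=.
have hom : forall h m, Mg h m -> K (c *: m).
  move=> h m' Mm.
  pose L := map (fun p : G * R => (gmul p.1 h, p.2 *: m')) l.
  have DL : forall q, List.In q L -> Mg q.1 q.2.
    move=> q qL; have [p [pl' ->]] := In_map qL; apply: HMM => //; exact: Dl.
  have [lq [[ndq [Dq sq]] Kq]] := Kg _ (Kr m').
  have sL : \sum_(q <- L) q.2 = \sum_(q <- lq) q.2.
    by rewrite /L big_map /= -scaler_suml -sl.
  have e := fsum_uniq HMD HMU DL Dq sL (gmul g h).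
  rewrite (@fsum_in _ _ L (gmul g h) (c *: m')) in e.
  - rewrite e; apply: (sum_closed K0 KD) => q ql _; exact: Kq.
  - by apply: NoDup_map_inj nd => x y /=; apply: gmul_inj_r.
  - exact: (In_map2 (fun p : G * R => (gmul p.1 h, p.2 *: m')) pl).
have [lm [_ [Dm ->]]] := HMe m.
rewrite scaler_sumr; apply: (sum_closed K0 KD) => q ql _; apply: (hom q.1); exact: Dm.
Qed.

Definition GC (S : R -> Prop) : R -> Prop := fun x =>
  exists l, hdecomp Rg x l /\ forall p, List.In p l -> S p.2.

Lemma GC0 S : GC S 0.
Proof. exists [::]; split => //; split; [constructor|split => //]; by rewrite big_nil. Qed.

Lemma GCD S x y : is_ideal S -> GC S x -> GC S y -> GC S (x + y).
Proof.
move=> hS [l1 [[_ [D1 ->]] S1]] [l2 [[_ [D2 ->]] S2]].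
have [l' [nd [H' [s' _]]]] := @gmerge _ _ _ HRD _ (id0 hS) (fun a b => @idD _ _ a b hS) (l1 ++ l2)
  ltac:(move=> p pa; case: (List.in_app_or _ _ _ pa) => pl; split;
        [exact: D1|exact: S1|exact: D2|exact: S2]).
exists l'; split; last by move=> p /H' [].
split => //; split; first by move=> p /H' [].
by rewrite s' big_cat.
Qed.

Lemma GC_homM S g c x : is_ideal S -> Rg g c -> GC S x -> GC S (c * x).
Proof.
move=> hS Dc [lx [[_ [Dx ->]] Sx]].
pose L := map (fun q : G * R => (gmul g q.1, c * q.2)) lx.
have [l' [nd [H' [s' _]]]] := @gmerge _ _ _ HRD _ (id0 hS) (fun a b => @idD _ _ a b hS) L
  ltac:(move=> p pL; have [q [ql ->]] := In_map pL; split;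
        [apply: HRM => //; exact: Dx | apply: idMl => //; exact: Sx]).
exists l'; split; last by move=> p /H' [].
split => //; split; first by move=> p /H' [].
by rewrite s' /L big_map big_distrr.
Qed.

Lemma GC_ideal S : is_ideal S -> graded_ideal Rg (GC S).
Proof.
move=> hS; split.
  split; first exact: GC0.
  split; first by move=> x y; apply: GCD.
  move=> r x Gx; have [lr [_ [Dr ->]]] := HRe r.
  rewrite big_distrl /=; apply: (sum_closed (@GC0 S) (fun a b => @GCD S a b hS)).
  move=> [g c] pl _ /=; apply: GC_homM => //; exact: (Dr _ pl).
move=> x [l [hd Sl]]; exists l; split => // p pl.
exists [:: p]; split; first by case: p pl => g v pl; apply: hdecomp1; case: hd => _ [H _]; exact: (H _ pl).
by move=> q [<-|[]]; apply: Sl.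
Qed.

Lemma GC_sub S x : is_ideal S -> GC S x -> S x.
Proof.
move=> hS [l [[_ [_ ->]] Sl]]; apply: (sum_closed (id0 hS) (fun a b => @idD _ _ a b hS)).
by move=> p pl _; apply: Sl.
Qed.

Lemma graded_ideal_ext (I J : R -> Prop) : (forall x, I x <-> J x) -> graded_ideal Rg I -> graded_ideal Rg J.
Proof.
move=> e [[I0 [ID IM]] Ig]; split.
  split; first by apply/e.
  split; first by move=> x y /e Ix /e Iy; apply/e; apply: ID.
  by move=> r x /e Ix; apply/e; apply: IM.
move=> x /e /Ig [l [hd H]]; exists l; split => // p pl; apply/e; exact: H.
Qed.

End Graded2.


Section KLsec.
Variables (G : Grp) (R : comPzRingType).
Variables (Rg : G -> R -> Prop).
Hypothesis HR : graded_ring Rg.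

Lemma KL (Z : R -> Prop) b : graded_ideal Rg Z -> homR Rg b -> (forall n, ~ Z (b ^+ n)) ->
  exists p, graded_prime_ideal Rg p /\ (forall x, Z x -> p x) /\ ~ p b.
Proof.
move=> hZ hb nZ.
have Zi : is_ideal Z by case: hZ.
pose PP := fun A : R -> Prop => graded_ideal Rg (fun x => Z x \/ A x) /\
   forall n, ~ (Z (b ^+ n) \/ A (b ^+ n)).
have [A [[gA nA] maxA]] : exists A, PP A /\ forall B, classical_sets.proper A B -> ~ PP B.
  apply: classical_sets.Zorn_bigcup => F FP Ftot.
  have two : forall x y, (Z x \/ exists2 i, F i & i x) -> (Z y \/ exists2 i, F i & i y) ->
      (Z x /\ Z y) \/ exists i, F i /\ (Z x \/ i x) /\ (Z y \/ i y).
    move=> x y [Zx|[i Fi ix]] [Zy|[j Fj jy]]; first by left.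
    - by right; exists j; split => //; split; [left|right].
    - by right; exists i; split => //; split; [right|left].
    - case: (Ftot i j Fi Fj) => ij.
        by right; exists j; split => //; split; right => //; apply: ij.
      by right; exists i; split => //; split; right => //; apply: ij.
  have back : forall i x, F i -> Z x \/ i x -> Z x \/ exists2 i, F i & i x.
    by move=> i x Fi [Zx|ix]; [left|right; exists i].
  split.
    split; first split.
    - by left; apply: id0.
    - split.
        move=> x y Ux Uy; case: (two x y Ux Uy) => [[Zx Zy]|[i [Fi [Hx Hy]]]].
          by left; apply: idD.
        apply: (back i) => //; have [[hi _] _] := FP i Fi; exact: (idD hi Hx Hy).
      move=> r x [Zx|[i Fi ix]]; first by left; apply: idMl.
      apply: (back i) => //; have [[hi _] _] := FP i Fi; apply: (idMl _ hi); right.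
      exact: ix.
    move=> x [Zx|[i Fi ix]].
      have [l [hd H]] := hZ.2 x Zx; exists l; split => // p pl; left; exact: H.
    have [[_ gi] _] := FP i Fi; have [l [hd H]] := gi x (or_intror ix).
    exists l; split => // p pl; apply: (back i) => //; exact: H.
  move=> n [Zn|[i Fi ib]]; first exact: (nZ n).
  have [_ ni] := FP i Fi; apply: (ni n); right; exact: ib.
pose p := fun x => Z x \/ A x.
have pi : is_ideal p by case: gA.
have np : forall n, ~ p (b ^+ n) by [].
exists p; split; last by split; [move=> x Zx; left | rewrite -(expr1 b); apply: np].
split; first exact: gA.
split; first by rewrite -(expr0 b); apply: np.
move=> a a' ha ha' paa'; apply: NNPP => H.
have [na na'] : ~ p a /\ ~ p a' by split => Hp; apply: H; [left|right].
have key : forall c, homR Rg c -> ~ p c -> exists i y s, p y /\ b ^+ i = y + s * c.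
  move=> c [g hc] npc; apply: NNPP => nex.
  pose Sc := fun x => exists y s, p y /\ x = y + s * c.
  have Sci : is_ideal Sc.
    split; first by exists 0, 0; split; [apply: id0|rewrite mul0r addr0].
    split.
      move=> x y [u [s [pu ->]]] [v [t [pv ->]]]; exists (u + v), (s + t).
      by split; [apply: idD | rewrite mulrDl !addrA (addrAC u v)].
    move=> r x [u [s [pu ->]]]; exists (r * u), (r * s).
    by split; [apply: idMl | rewrite mulrDr mulrA].
  pose pc := GC Rg Sc.
  have gpc := GC_ideal HR Sci.
  have ppc : forall x, p x -> pc x.
    move=> x px; have [l [hd Hl]] := gA.2 x px; exists l; split => // q ql.
    by exists q.2, 0; split; [apply: Hl | rewrite mul0r addr0].
  have pcc : pc c.
    exists [:: (g, c)]; split; first exact: hdecomp1.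
    by move=> q [<-|[]]; exists 0, 1; split; [apply: id0 | rewrite mul1r add0r].
  apply: (maxA pc).
    split; first by move=> x Ax; apply: ppc; right.
    by move=> sub; apply: npc; right; apply: sub.
  split.
    apply: graded_ideal_ext gpc => x; split; first by right.
    by case => // Zx; apply: ppc; left.
  move=> n [Zn|pn]; first exact: (nZ n).
  apply: nex; have [y [s [py e]]] := GC_sub Sci pn; by exists n, y, s.
have [i [y [s [py ei]]]] := key a ha na.
have [j [y' [s' [py' ej]]]] := key a' ha' na'.
apply: (np (i + j)%N).
have -> : b ^+ (i + j) = y * (y' + s' * a') + (s * a) * y' + (s * s') * (a * a').
  by rewrite exprD ei ej; ring.
apply: idD => //; first apply: idD => //.
- exact: idMr.
- exact: idMl.
- exact: idMl.
Qed.

End KLsec.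


Section QP.
Variables (G : Grp) (R : comPzRingType) (M : lmodType R).
Variables (Rg : G -> R -> Prop) (Mg : G -> M -> Prop).
Hypothesis HR : graded_ring Rg.
Hypothesis HM : graded_module Rg Mg.

Lemma Gr_mono (I J : R -> Prop) r : (forall x, I x -> J x) -> Gr Rg I r -> Gr Rg J r.
Proof.
move=> IJ [l [hd H]]; exists l; split => // p pl; have [n In] := H p pl; exists n; exact: IJ.
Qed.

Lemma qp_submod Q : qpSpec Rg Mg Q -> is_submod Q.
Proof. by case=> [[[]]]. Qed.

Lemma prime_avoid Q c : qpSpec Rg Mg Q -> homR Rg c -> ~ (exists n, colon Q (c ^+ n)) ->
  exists p P, graded_prime_ideal Rg p /\ graded_prime_submod Rg Mg P /\
   (forall x, Q x -> P x) /\ (forall r, colon P r <-> p r) /\ ~ p c /\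
   (forall r, colon Q r -> p r).
Proof.
move=> hQ hc nc.
have [gQ _] := hQ.1.
have [p [hp [Zp npc]]] := KL HR (colon_graded HR HM gQ) hc (fun n Hn => nc (ex_intro _ n Hn)).
have [P [hP [QP cP]]] := hQ.2 p hp Zp.
by exists p, P.
Qed.

Lemma qp_prime Q a b : qpSpec Rg Mg Q -> homR Rg a -> homR Rg b ->
  (exists k, colon Q ((a * b) ^+ k)) -> ~ (exists n, colon Q (a ^+ n)) ->
  exists n, colon Q (b ^+ n).
Proof.
move=> hQ ha hb [k Hk] na; apply: NNPP => nb.
have [p [P [hp [hP [QP [cP [npb _]]]]]]] := prime_avoid hQ hb nb.
case: k Hk => [|k] Hk.
  by apply: na; exists 0%N; move: Hk; rewrite !expr0.
have Ps : is_submod P by case: hP => [[]].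
have P0 : P 0 by case: Ps.
have PD : forall x y, P x -> P y -> P (x + y) by case: Ps => _ [].
have Pb : colon P (b ^+ k.+1).
  move=> m; have [lm [_ [Dm ->]]] := HMe HM m; rewrite scaler_sumr.
  apply: (sum_closed P0 PD) => q ql _.
  have Mq := Dm q ql.
  have hq : Q (a ^+ k.+1 *: (b ^+ k.+1 *: q.2)) by rewrite scalerA -exprMn; apply: Hk.
  have [g' hb'] := homR_exp HR k hb.
  have hm : homM Mg (b ^+ k.+1 *: q.2) by exists (gmul g' q.1); apply: (HMM HM).
  case: (hQ.1.2.2 _ _ (homR_exp HR k ha) hm hq) => [Gra|GrMb].
    have [j Hj] := Gr_rad (colon_ideal (qp_submod hQ)) Gra.
    by exfalso; apply: na; exists (k.+1 * j)%N; rewrite exprM.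
  exact: (GrMb P hP QP).
by apply: npb; apply: (prime_pow HR (n := k.+1)) => //; apply/cP.
Qed.

Lemma bad (I Z : R -> Prop) : ~ (forall r, Gr Rg I r -> Gr Rg Z r) ->
  exists a, homR Rg a /\ (exists n, I (a ^+ n)) /\ ~ (exists n, Z (a ^+ n)).
Proof.
move=> nall; apply: NNPP => nex; apply: nall => r [l [hd Hl]].
exists l; split => // p pl; apply: NNPP => np; apply: nex; exists p.2.
split; first by exists p.1; case: hd => _ [H _]; exact: H.
by split; [exact: Hl | exact: np].
Qed.

End QP.


Unset Implicit Arguments.
Theorem theorem3p1 (G : Grp) (R : comPzRingType) (M : lmodType R)
  (Rg : G -> R -> Prop) (Mg : G -> M -> Prop)
  (HR : graded_ring Rg) (HM : graded_module Rg Mg)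
  (K N : M -> Prop) (I : Type) (Ks : I -> M -> Prop)
  (hK : graded_submod Mg K) (hN : graded_submod Mg N)
  (hKs : forall i, graded_submod Mg (Ks i)) :
  (* (1) *)
  (forall Q, qpV Rg Mg (fun m : M => m = 0) Q <-> qpSpec Rg Mg Q) /\
  (forall Q, ~ qpV Rg Mg (fun _ : M => True) Q) /\
  (* (2) intersection taken inside qp.Spec_g(M) *)
  (forall Q, (qpSpec Rg Mg Q /\ forall i, qpV Rg Mg (Ks i) Q) <->
             qpV Rg Mg (ideal_mul_mod (ideal_sum (fun i => colon (Ks i)))) Q) /\
  (* (3) *)
  (forall Q, (qpV Rg Mg N Q \/ qpV Rg Mg K Q) <->
             qpV Rg Mg (fun m => N m /\ K m) Q).
Proof.
split.
  move=> Q; split; first by case.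
  move=> hQ; split => // r; apply: Gr_mono => x Hx m.
  rewrite (Hx m); by case: (qp_submod hQ).
split.
  move=> Q [hQ H].
  have [l hl] := HRe HR 1.
  have G1 : Gr Rg (colon (fun _ : M => True)) 1 by exists l; split => // p _; exists 0%N.
  have [k Hk] := Gr_rad (colon_ideal (qp_submod hQ)) (H 1 G1).
  have [m nm] := hQ.1.2.1; apply: nm; rewrite -(scale1r m); move: (Hk m); by rewrite expr1n.
split.
  move=> Q; split.
    move=> [hQ H]; split => // r [l [hd Hl]]; exists l; split => // -[g c] pl /=.
    apply: NNPP => nc.
    have [n Hn] := Hl _ pl.
    have Dc : Rg g c by case: hd => _ [D _]; exact: (D _ pl).
    have hc : homR Rg c by exists g.
    have [p [P [hp [hP [QP [cP [npc Zp]]]]]]] := prime_avoid HR HM hQ hc nc.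
    have pi : is_ideal p by case: hp => [[]].
    have Jp : forall x, ideal_sum (fun i => colon (Ks i)) x -> p x.
      move=> x [lx [Hlx ->]].
      apply: (sum_closed (id0 pi) (fun a b => @idD _ _ a b pi)) => -[i y] yl _ /=.
      have Ky : colon (Ks i) y := Hlx _ yl.
      have [ly [hdy Hly]] := (colon_graded HR HM (hKs i)).2 y Ky.
      case: hdy => _ [Dy ->].
      apply: (sum_closed (id0 pi) (fun a b => @idD _ _ a b pi)) => -[h z] zl _ /=.
      have hz : Rg h z := Dy _ zl.
      have Gz : Gr Rg (colon (Ks i)) z by apply: (Gr_hom (n := 1%N) hz); rewrite expr1; exact: (Hly _ zl).
      have [k Hk] := Gr_rad (colon_ideal (qp_submod hQ)) ((H i).2 z Gz).
      by apply: (prime_pow HR (n := k)) => //; [exists h | apply: Zp].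
    have Ps : is_submod P by case: hP => [[]].
    have JMP : forall m, ideal_mul_mod (ideal_sum (fun i => colon (Ks i))) m -> P m.
      move=> m [lm [Hl' ->]]; apply: (sum_closed (T := (R * M)%type) (S := P)).
      - by case: Ps.
      - by case: Ps => _ [].
      by move=> q ql _; apply/(cP q.1).2; apply: Jp; apply: Hl'.
    apply: npc; apply: (prime_pow HR (n := n)) => //; apply/cP => m; apply: JMP; exact: Hn.
  move=> [hQ H]; split => // i; split => // r Gr'; apply: H; apply: Gr_mono Gr' => x Hx m.
  exists [:: (x, m)]; split; last by rewrite big_cons big_nil addr0.
  move=> q [<-|[]] /=; exists [:: (i, x)]; split; last by rewrite big_cons big_nil addr0.
  by move=> q' [e|[]]; subst q'.
move=> Q; split.
  by case=> -[hQ H]; split => // r Gr'; apply: H; apply: Gr_mono Gr' => x Hx m; case: (Hx m).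
move=> [hQ H].
case: (classic (forall r, Gr Rg (colon N) r -> Gr Rg (colon Q) r)) => hN'.
  by left.
case: (classic (forall r, Gr Rg (colon K) r -> Gr Rg (colon Q) r)) => hK'.
  by right.
exfalso.
have [a [ha [[n Hn] na]]] := bad hN'.
have [b [hb [[m Hm] nb]]] := bad hK'.
have iN := colon_ideal hN.1.
have iK := colon_ideal hK.1.
have cN : colon N ((a * b) ^+ (n + m)).
  have -> : (a * b) ^+ (n + m) = (a ^+ m * b ^+ (n + m)) * a ^+ n by rewrite exprMn !exprD; ring.
  exact: (idMl _ iN Hn).
have cK : colon K ((a * b) ^+ (n + m)).
  have -> : (a * b) ^+ (n + m) = (a ^+ (n + m) * b ^+ n) * b ^+ m by rewrite exprMn !exprD; ring.
  exact: (idMl _ iK Hm).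
have [ga Ha] := ha.
have [gb Hb] := hb.
have Gab : Gr Rg (colon (fun m0 => N m0 /\ K m0)) (a * b).
  apply: (Gr_hom (n := (n + m)%N) (HRM HR Ha Hb)) => x; split; [exact: cN | exact: cK].
have [k Hk] := Gr_rad (colon_ideal (qp_submod hQ)) (H _ Gab).
exact: nb (qp_prime HR HM hQ ha hb (ex_intro _ k Hk) na).
Qed.
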